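(* Under the standing assumptions, assume $n> m$ and that all kept singular values $S_{kk}$ are strictly positive. Set $\widetilde{dU}_2:=(\mathbb{1}_n-UU^\dagger)dU$ and $\widetilde{dV}_2:=(\mathbb{1}_m-VV^\dagger)dV$. Then $\widetilde{dV}_2$ satisfies the Sylvester equation $$\widetilde{dV}_2\,S^2-A^\dagger A\,\widetilde{dV}_2=(\mathbb{1}_m-VV^\dagger)\,dA^\dagger U S+A^\dagger(\mathbb{1}_n-UU^\dagger)\,dA\,V,$$ and $$\widetilde{dU}_2=(\mathbb{1}_n-UU^\dagger)\,dA\,V S^{-1}+A\,\widetilde{dV}_2\,S^{-1}.$$
   Context: Let $n,m\ge1$, $r=\min(n,m)$ and $1\le t<r$. Let $\tau\mapsto A(\tau)\in\mathbb{C}^{n\times m}$ be differentiable, and suppose there are differentiable maps $\tau\mapsto U\in\mathbb{C}^{n\times t}$, $S\in\mathbb{R}^{t\times t}$, $V\in\mathbb{C}^{m\times t}$, $U_\perp\in\mathbb{C}^{n\times(r-t)}$, $S_\perp\in\mathbb{R}^{(r-t)\times(r-t)}$, $V_\perp\in\mathbb{C}^{m\times(r-t)}$ such that for every $\tau$: $A=USV^\dagger+U_\perp S_\perp V_\perp^\dagger$ is a (thin) singular value decomposition, i.e. $S,S_\perp$ are diagonal with nonnegative entries, $(U\,|\,U_\perp)$ and $(V\,|\,V_\perp)$ have orthonormal columns. Here $d$ denotes the derivative with respect to $\tau$, $^\dagger$ the conjugate transpose, $\mathbb{1}_k$ the $k\times k$ identity. *)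

(* Defs.v *)
From HB Require Import structures.
From mathcomp Require Import all_boot all_order all_algebra.
From mathcomp Require Import all_classical all_reals all_analysis.
From mathcomp Require Import complex.
Set Implicit Arguments. Unset Strict Implicit. Unset Printing Implicit Defensive.
Import Order.TTheory GRing.Theory Num.Theory.
Local Open Scope ring_scope.

Definition adj (R : rcfType) (p q : nat) (A : 'M[R[i]]_(p, q)) : 'M[R[i]]_(q, p) :=
  (map_mx (@conjc R) A)^T.

Definition cmx (R : rcfType) (p q : nat) (A : 'M[R]_(p, q)) : 'M[R[i]]_(p, q) :=
  map_mx (fun x : R => (x%:C)%C) A.

Definition rmx_differentiable (R : realType) (p q : nat) (F : R -> 'M[R]_(p, q)) :=
  forall (i : 'I_p) (j : 'I_q) (tau : R), derivable (fun s => F s i j) tau 1.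

Definition cmx_differentiable (R : realType) (p q : nat) (F : R -> 'M[R[i]]_(p, q)) :=
  forall (i : 'I_p) (j : 'I_q) (tau : R),
    derivable (fun s => complex.Re (F s i j)) tau 1 /\ derivable (fun s => complex.Im (F s i j)) tau 1.

Definition cmx_deriv (R : realType) (p q : nat) (F : R -> 'M[R[i]]_(p, q)) (tau : R)
  : 'M[R[i]]_(p, q) :=
  \matrix_(i, j) Complex (derive1 (fun s => complex.Re (F s i j)) tau) (derive1 (fun s => complex.Im (F s i j)) tau).

(* Main.v *)
Require Import Defs.
From HB Require Import structures.
From mathcomp Require Import all_boot all_order all_algebra.
From mathcomp Require Import all_classical all_reals all_analysis.
From mathcomp Require Import complex.
From mathcomp Require Import ring.
Import Order.TTheory GRing.Theory Num.Theory.
Set Implicit Arguments. Unset Strict Implicit.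
Local Open Scope ring_scope.

Section D.
Variable R : realType.

Definition cisd (p q : nat) (F : R -> 'M[R[i]]_(p, q)) (tau : R) (D : 'M[R[i]]_(p, q)) :=
  forall i j, is_derive tau 1 (fun s => complex.Re (F s i j)) (complex.Re (D i j)) /\
              is_derive tau 1 (fun s => complex.Im (F s i j)) (complex.Im (D i j)).

Lemma cisd_deriv p q (F : R -> 'M[R[i]]_(p, q)) tau :
  cmx_differentiable F -> cisd F tau (cmx_deriv F tau).
Proof.
move=> dF i j; have [h1 h2] := dF i j tau; rewrite mxE /= !derive1E.
by split; apply: derivableP.
Qed.

Lemma cisd_uniq p q (F : R -> 'M[R[i]]_(p, q)) tau D :
  cisd F tau D -> cmx_deriv F tau = D.
Proof.
move=> dF; apply/matrixP => i j; rewrite mxE !derive1E.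
have [h1 h2] := dF i j; rewrite !derive_val.
by case: (D i j).
Qed.

Lemma cisd_ext p q (F G : R -> 'M[R[i]]_(p, q)) tau D :
  (forall s, F s = G s) -> cisd F tau D -> cisd G tau D.
Proof. by move=> e; have -> : F = G by apply: funext. Qed.

Lemma ReD (x y : R[i]) : complex.Re (x + y) = complex.Re x + complex.Re y.
Proof. by case: x; case: y. Qed.
Lemma ImD (x y : R[i]) : complex.Im (x + y) = complex.Im x + complex.Im y.
Proof. by case: x; case: y. Qed.
Lemma ReM (x y : R[i]) : complex.Re (x * y) = complex.Re x * complex.Re y - complex.Im x * complex.Im y.
Proof. by case: x; case: y. Qed.
Lemma ImM (x y : R[i]) : complex.Im (x * y) = complex.Re x * complex.Im y + complex.Im x * complex.Re y.
Proof. by case: x => a b; case: y => c d /=; rewrite addrC. Qed.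
Lemma Re_sum (I : Type) (r : seq I) (f : I -> R[i]) :
  complex.Re (\sum_(k <- r) f k) = \sum_(k <- r) complex.Re (f k).
Proof. by apply: (big_morph _ ReD). Qed.
Lemma Im_sum (I : Type) (r : seq I) (f : I -> R[i]) :
  complex.Im (\sum_(k <- r) f k) = \sum_(k <- r) complex.Im (f k).
Proof. by apply: (big_morph _ ImD). Qed.

Lemma is_derive_ext (x v : R) (f g : R -> R) df :
  (forall s, f s = g s) -> is_derive x v f df -> is_derive x v g df.
Proof. by move=> e; have -> : f = g by apply: funext. Qed.

Lemma is_derive_ext2 (x v : R) (f g : R -> R) df dg :
  (forall s, f s = g s) -> df = dg -> is_derive x v f df -> is_derive x v g dg.
Proof. by move=> e <-; have -> : f = g by apply: funext. Qed.

Lemma cisdM p q r (F : R -> 'M[R[i]]_(p, q)) (G : R -> 'M[R[i]]_(q, r)) tau dF dG :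
  cisd F tau dF -> cisd G tau dG ->
  cisd (fun s => F s *m G s) tau (dF *m G tau + F tau *m dG).
Proof.
move=> hF hG i j.
have e1 : (fun s => complex.Re ((F s *m G s) i j)) =
  \sum_(k < q) (fun s => complex.Re (F s i k) * complex.Re (G s k j)
                         - complex.Im (F s i k) * complex.Im (G s k j)).
  by rewrite fct_sumE; apply: funext => s; rewrite mxE Re_sum; apply: eq_bigr => k _; rewrite ReM.
have e2 : (fun s => complex.Im ((F s *m G s) i j)) =
  \sum_(k < q) (fun s => complex.Re (F s i k) * complex.Im (G s k j)
                         + complex.Im (F s i k) * complex.Re (G s k j)).
  by rewrite fct_sumE; apply: funext => s; rewrite mxE Im_sum; apply: eq_bigr => k _; rewrite ImM.
rewrite e1 e2 !mxE ReD ImD !Re_sum !Im_sum -!big_split /=.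
split; apply: is_derive_sum => k; have [a1 a2] := hF i k; have [b1 b2] := hG k j.
- apply: (is_derive_ext2 _ _ (is_deriveB (is_deriveM a1 b1) (is_deriveM a2 b2))) => [s|]; first by [].
  rewrite /= ?ReM ?ImM /GRing.scale /=. ring.
- apply: (is_derive_ext2 _ _ (is_deriveD (is_deriveM a1 b2) (is_deriveM a2 b1))) => [s|]; first by [].
  rewrite /= ?ReM ?ImM /GRing.scale /=. ring.
Qed.


Lemma cisd_adj p q (F : R -> 'M[R[i]]_(p, q)) tau dF :
  cisd F tau dF -> cisd (fun s => adj (F s)) tau (adj dF).
Proof.
move=> hF i j; have [a1 a2] := hF j i; split.
- apply: (is_derive_ext2 _ _ a1) => [s|]; rewrite /adj !mxE; [by case: (F s j i) | by case: (dF j i)].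
- apply: (is_derive_ext2 _ _ (is_deriveN a2)) => [s|]; rewrite /adj !mxE /=.
  by change (- complex.Im (F s j i) = complex.Im (F s j i)^*%C); case: (F s j i). by case: (dF j i).
Qed.

Lemma cisd_cmx p q (S : R -> 'M[R]_(p, q)) tau :
  rmx_differentiable S -> exists D, cisd (fun s => cmx (S s)) tau D.
Proof.
move=> hS; exists (cmx (\matrix_(i, j) 'D_1 (fun s => S s i j) tau)) => i j; split.
- apply: (is_derive_ext2 _ _ (derivableP (hS i j tau))) => [s|]; by rewrite /cmx !mxE.
- apply: (is_derive_ext2 _ _ (is_derive_cst 0 tau 1)) => [s|]; by rewrite /cmx !mxE.
Qed.

End D.
Section Alg.
Variable R : rcfType.

Lemma adjM p q r (A : 'M[R[i]]_(p, q)) (B : 'M[R[i]]_(q, r)) : adj (A *m B) = adj B *m adj A.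
Proof. by rewrite /adj map_mxM trmx_mul. Qed.
Lemma adjD p q (A B : 'M[R[i]]_(p, q)) : adj (A + B) = adj A + adj B.
Proof. by apply/matrixP => i j; rewrite /adj !mxE rmorphD. Qed.
Lemma adjN p q (A : 'M[R[i]]_(p, q)) : adj (- A) = - adj A.
Proof. by apply/matrixP => i j; rewrite /adj !mxE rmorphN. Qed.
Lemma adjB p q (A B : 'M[R[i]]_(p, q)) : adj (A - B) = adj A - adj B.
Proof. by rewrite adjD adjN. Qed.
Lemma adjK p q (A : 'M[R[i]]_(p, q)) : adj (adj A) = A.
Proof. by apply/matrixP => i j; rewrite /adj !mxE conjcK. Qed.
Lemma adj0 p q : adj (0 : 'M[R[i]]_(p, q)) = 0.
Proof. by apply/matrixP => i j; rewrite /adj !mxE conjc0. Qed.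
Lemma adj1 p : adj (1%:M : 'M[R[i]]_p) = 1%:M.
Proof. by apply/matrixP => i j; rewrite /adj !mxE conjc_nat eq_sym. Qed.
Lemma adj_cmx p (S : 'M[R]_p) : is_diag_mx S -> adj (cmx S) = cmx S.
Proof.
move=> /is_diag_mxP dS; apply/matrixP => i j; rewrite /adj /cmx !mxE conjc_real.
case: (eqVneq i j) => [->//|ne]; rewrite !dS //; rewrite eq_sym //.
Qed.
Lemma adj_row p q r (A : 'M[R[i]]_(p, q)) (B : 'M[R[i]]_(p, r)) :
  adj (row_mx A B) = col_mx (adj A) (adj B).
Proof. by rewrite /adj map_row_mx tr_row_mx. Qed.

Lemma orth_split p q r (A : 'M[R[i]]_(p, q)) (B : 'M[R[i]]_(p, r)) :
  adj (row_mx A B) *m row_mx A B = 1%:M ->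
  adj A *m A = 1%:M /\ adj A *m B = 0 /\ adj B *m A = 0.
Proof.
rewrite adj_row mul_col_row  scalar_mx_block.
by move=> /eq_block_mx [-> -> -> _].
Qed.

Lemma key n m t k (A : 'M[R[i]]_(n, m)) (U : 'M[R[i]]_(n, t)) (Up : 'M[R[i]]_(n, k))
  (V : 'M[R[i]]_(m, t)) (Vp : 'M[R[i]]_(m, k)) (Sc : 'M[R[i]]_t) (Spc : 'M[R[i]]_k)
  (dA : 'M[R[i]]_(n, m)) (dU : 'M[R[i]]_(n, t)) (dV : 'M[R[i]]_(m, t)) (dSc : 'M[R[i]]_t) :
  A = U *m Sc *m adj V + Up *m Spc *m adj Vp ->
  adj U *m U = 1%:M -> adj U *m Up = 0 -> adj V *m V = 1%:M -> adj Vp *m V = 0 ->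
  dA *m V + A *m dV = dU *m Sc + U *m dSc ->
  adj dA *m U + adj A *m dU = dV *m Sc + V *m dSc ->
  let PU := 1%:M - U *m adj U in let PV := 1%:M - V *m adj V in
  (PV *m dV) *m (Sc *m Sc) - adj A *m A *m (PV *m dV)
     = PV *m adj dA *m U *m Sc + adj A *m PU *m dA *m V
  /\ (PU *m dU) *m Sc = PU *m dA *m V + A *m (PV *m dV).
Proof.
move=> HA HUU HUUp HVV HVpV E1 E2 PU PV.
have AV : A *m V = U *m Sc.
  by rewrite HA mulmxDl -!mulmxA HVV HVpV mulmx1 !mulmx0 addr0.
have UA : adj U *m A = Sc *m adj V.
  by rewrite HA mulmxDr !mulmxA HUU HUUp mul1mx !mul0mx addr0.
have PUU : PU *m U = 0 by rewrite /PU mulmxBl mul1mx -mulmxA HUU mulmx1 subrr.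
have PUA : PU *m A = A *m PV.
  rewrite /PU /PV mulmxBl mulmxBr mul1mx mulmx1 -mulmxA UA.
  by rewrite !mulmxA AV.
have adjPU : adj PU = PU by rewrite /PU adjB adj1 adjM adjK.
have adjPV : adj PV = PV by rewrite /PV adjB adj1 adjM adjK.
have PVA : PV *m adj A = adj A *m PU.
  by rewrite -adjPV -adjPU -!adjM PUA.
have F1 : PU *m dU *m Sc = PU *m dA *m V + A *m (PV *m dV).
  have := congr1 (mulmx PU) E1.
  rewrite !mulmxDr !mulmxA PUU mul0mx addr0 PUA => <-.
  by [].
have F2 : PV *m dV *m Sc = PV *m adj dA *m U + adj A *m (PU *m dU).
  have := congr1 (mulmx PV) E2.
  have PVV : PV *m V = 0 by rewrite /PV mulmxBl mul1mx -mulmxA HVV mulmx1 subrr.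
  rewrite !mulmxDr !mulmxA PVV mul0mx addr0 PVA => <-.
  by [].
split; last by [].
rewrite mulmxA F2 mulmxDl -(mulmxA (adj A) (PU *m dU)) F1 mulmxDr.
rewrite -addrA; congr (_ + _); rewrite !mulmxA; apply/eqP; rewrite subr_eq; apply/eqP.
by [].
Qed.
End Alg.

Lemma cmx_unit (R : rcfType) p (S : 'M[R]_p) :
  is_diag_mx S -> (forall k, 0 < S k k) -> cmx S \in unitmx.
Proof.
move=> /diag_mxP [d ->] pos.
rewrite unitmxE (_ : cmx (diag_mx d) = map_mx (real_complex R) (diag_mx d)) //.
rewrite det_map_mx unitfE fmorph_eq0 det_diag.
apply/prodf_neq0 => k _.
by have := pos k; rewrite mxE eqxx mulr1n => /gt_eqF ->.
Qed.

Lemma AV_id (R : rcfType) n m t k (A : 'M[R[i]]_(n, m)) (U : 'M[R[i]]_(n, t)) (Up : 'M[R[i]]_(n, k))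
  (V : 'M[R[i]]_(m, t)) (Vp : 'M[R[i]]_(m, k)) (Sc : 'M[R[i]]_t) (Spc : 'M[R[i]]_k) :
  A = U *m Sc *m adj V + Up *m Spc *m adj Vp ->
  adj V *m V = 1%:M -> adj Vp *m V = 0 -> A *m V = U *m Sc.
Proof. by move=> HA HVV HVpV; rewrite HA mulmxDl -!mulmxA HVV HVpV mulmx1 !mulmx0 addr0. Qed.

Lemma AdU_id (R : rcfType) n m t k (A : 'M[R[i]]_(n, m)) (U : 'M[R[i]]_(n, t)) (Up : 'M[R[i]]_(n, k))
  (V : 'M[R[i]]_(m, t)) (Vp : 'M[R[i]]_(m, k)) (Sc : 'M[R[i]]_t) (Spc : 'M[R[i]]_k) :
  A = U *m Sc *m adj V + Up *m Spc *m adj Vp -> adj Sc = Sc ->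
  adj U *m U = 1%:M -> adj Up *m U = 0 -> adj A *m U = V *m Sc.
Proof.
move=> HA HSc HUU HUpU; rewrite HA adjD !adjM !adjK HSc mulmxDl -!mulmxA HUU HUpU.
by rewrite mulmx1 !mulmx0 addr0.
Qed.

Theorem mainTheorem8 (R : realType) (n m t : nat)
  (A : R -> 'M[R[i]]_(n, m))
  (U : R -> 'M[R[i]]_(n, t)) (S : R -> 'M[R]_t) (V : R -> 'M[R[i]]_(m, t))
  (Up : R -> 'M[R[i]]_(n, minn n m - t)) (Sp : R -> 'M[R]_(minn n m - t))
  (Vp : R -> 'M[R[i]]_(m, minn n m - t)) :
  (1 <= m)%N -> (1 <= t)%N -> (t < minn n m)%N ->
  cmx_differentiable A ->
  cmx_differentiable U -> rmx_differentiable S -> cmx_differentiable V ->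
  cmx_differentiable Up -> rmx_differentiable Sp -> cmx_differentiable Vp ->
  (forall tau, A tau = U tau *m cmx (S tau) *m adj (V tau)
                       + Up tau *m cmx (Sp tau) *m adj (Vp tau)) ->
  (forall tau, is_diag_mx (S tau) /\ (forall k, 0 <= S tau k k)) ->
  (forall tau, is_diag_mx (Sp tau) /\ (forall k, 0 <= Sp tau k k)) ->
  (forall tau, adj (row_mx (U tau) (Up tau)) *m row_mx (U tau) (Up tau) = 1%:M) ->
  (forall tau, adj (row_mx (V tau) (Vp tau)) *m row_mx (V tau) (Vp tau) = 1%:M) ->
  (* additional assumptions of the theorem *)
  (m < n)%N ->
  (forall tau k, 0 < S tau k k) ->
  forall tau : R,
    let dA := cmx_deriv A tau in
    let dU := cmx_deriv U tau in
    let dV := cmx_deriv V tau in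
    let Sc := cmx (S tau) in
    let PU := 1%:M - U tau *m adj (U tau) in
    let PV := 1%:M - V tau *m adj (V tau) in
    let dU2 := PU *m dU in
    let dV2 := PV *m dV in
    dV2 *m (Sc *m Sc) - adj (A tau) *m A tau *m dV2
      = PV *m adj dA *m U tau *m Sc + adj (A tau) *m PU *m dA *m V tau
    /\ dU2 = PU *m dA *m V tau *m invmx Sc + A tau *m dV2 *m invmx Sc.
Proof.
move=> _ _ _ dA_ dU_ dS_ dV_ _ _ _ HA HS HSp HU HV _ Spos tau.
have AVs s : A s *m V s = U s *m cmx (S s).
  have [HVV [_ HVpV]] := orth_split (HV s).
  exact: AV_id (HA s) HVV HVpV.
have AdUs s : adj (A s) *m U s = V s *m cmx (S s).
  have [HUU [_ HUpU]] := orth_split (HU s).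
  exact: AdU_id (HA s) (adj_cmx (HS s).1) HUU HUpU.
have [dSc hdS] := cisd_cmx tau dS_.
have E1 : cmx_deriv A tau *m V tau + A tau *m cmx_deriv V tau
          = cmx_deriv U tau *m cmx (S tau) + U tau *m dSc.
  rewrite -(cisd_uniq (cisdM (cisd_deriv tau dA_) (cisd_deriv tau dV_))).
  exact: (cisd_uniq (cisd_ext (fun s => esym (AVs s)) (cisdM (cisd_deriv tau dU_) hdS))).
have E2 : adj (cmx_deriv A tau) *m U tau + adj (A tau) *m cmx_deriv U tau
          = cmx_deriv V tau *m cmx (S tau) + V tau *m dSc.
  rewrite -(cisd_uniq (cisdM (cisd_adj (cisd_deriv tau dA_)) (cisd_deriv tau dU_))).
  exact: (cisd_uniq (cisd_ext (fun s => esym (AdUs s)) (cisdM (cisd_deriv tau dV_) hdS))).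
have [HUU [HUUp _]] := orth_split (HU tau).
have [HVV [_ HVpV]] := orth_split (HV tau).
have [K1 K2] := key (HA tau) HUU HUUp HVV HVpV E1 E2.
split; first exact: K1.
rewrite -mulmxDl -K2 mulmxK //.
by apply: cmx_unit; [exact: (HS tau).1 | exact: Spos].
Qed.
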